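(* In $\mathrm{TSym}$, for every planar tree $t$ of positive degree, $$\Delta_+(M_t)=\sum_{i\in\mathrm{GD}(t)}M_{{}^it}\otimes M_{t^i}.$$
   Context: A planar tree has linearly ordered children at each node, each node being a leaf or having $\ge2$ children (internal node); $\deg t$ = number of leaves minus one, $\mathrm{ideg}(t)$ = number of internal nodes, leaves numbered left to right. For $0\le i\le\deg t$, with $P$ the path from the root to leaf $i+1$: ${}^it$ is obtained by deleting, at each internal node on $P$, the children strictly to the right of the child on $P$ (with their subtrees), then contracting nodes with exactly one child; $t^i$ likewise with the children strictly to the left. The splitting is allowable if $\mathrm{ideg}({}^it)+\mathrm{ideg}(t^i)=\mathrm{ideg}(t)$. $\mathrm{TSym}$ has basis $\{F_t\}$ over planar trees and coproduct $\Delta(F_t)=\sum F_{{}^it}\otimes F_{t^i}$ over $0\le i\le\deg t$ with allowable splitting; $\Delta_+(x)=\Delta(x)-x\otimes1-1\otimes x$ with $1$ the one-leaf tree. $s/r$ identifies the root of $s$ with the leftmost leaf of $r$; $\mathrm{GD}(t)=\{i\in\{1,\dots,\deg t-1\}: t=s/r \text{ for some } s,r,\ \deg s=i\}$. Planar Tamari order: if an internal node $x$ has children $c_1,\dots,c_{a-1},y$ ($a\ge2$) with $y$ internal having children $d_1,\dots,d_{b+1}$ ($b\ge1$), the left rotation at $x$ replaces the subtree at $x$ by a node with children $z,d_2,\dots,d_{b+1}$, where $z$ is a new node with children $c_1,\dots,c_{a-1},d_1$; $\le_{PT}$ is the reflexive–transitive closure of ''$t$ is a left rotation of $s$''. The monomial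 basis is defined by $F_s=\sum_{t\ge_{PT}s}M_t$. *)

(* Defs.v *)
From Stdlib Require Import Relations ClassicalDescription.
From HB Require Import structures.
From mathcomp Require Import all_boot all_order all_algebra.
Set Implicit Arguments. Unset Strict Implicit. Unset Printing Implicit Defensive.
Import GRing.Theory.
Local Open Scope ring_scope.

Inductive ptree : Type := Leaf | Node of seq ptree.

Fixpoint enc (t : ptree) : GenTree.tree unit :=
  match t with
  | Leaf => GenTree.Leaf tt
  | Node cs => GenTree.Node 0 (map enc cs)
  end.

Fixpoint dec (g : GenTree.tree unit) : ptree :=
  match g with
  | GenTree.Leaf _ => Leaf
  | GenTree.Node _ gs => Node (map dec gs)
  end.

Lemma encK : cancel enc dec.
Proof.
rewrite /cancel; fix IH 1; case=> [|cs] //=; congr Node.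
elim: cs => [|c cs IHcs] //=; by rewrite IH IHcs.
Qed.

HB.instance Definition _ := Countable.copy ptree (can_type encK).

Fixpoint valid (t : ptree) : bool :=
  match t with
  | Leaf => true
  | Node cs => (2 <= size cs)%N && all valid cs
  end.

Fixpoint nleaves (t : ptree) : nat :=
  match t with
  | Leaf => 1%N
  | Node cs => sumn (map nleaves cs)
  end.

Definition deg (t : ptree) : nat := (nleaves t).-1.

Fixpoint ideg (t : ptree) : nat :=
  match t with
  | Leaf => 0%N
  | Node cs => (sumn (map ideg cs)).+1
  end.

(* Splittings.  [lcut t i] = ^i t and [rcut t i] = t^i, where the path *)
(* goes to leaf i+1 (leaves numbered 1,2,... from the left), i.e. leaf  *)
(* number i counted from 0.  A node left with one child is contracted. *)

Fixpoint lcut (t : ptree) (i : nat) : ptree :=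
  match t with
  | Leaf => Leaf
  | Node cs =>
    let fix go (cs : seq ptree) (i : nat) (acc : seq ptree) : seq ptree :=
      match cs with
      | [::] => acc
      | c :: cs' => if (i < nleaves c)%N then rcons acc (lcut c i)
                    else go cs' (i - nleaves c)%N (rcons acc c)
      end in
    match go cs i [::] with
    | [:: c] => c
    | l => Node l
    end
  end.

Fixpoint rcut (t : ptree) (i : nat) : ptree :=
  match t with
  | Leaf => Leaf
  | Node cs =>
    let fix go (cs : seq ptree) (i : nat) : seq ptree :=
      match cs with
      | [::] => [::]
      | c :: cs' => if (i < nleaves c)%N then rcut c i :: cs'
                    else go cs' (i - nleaves c)%N
      end in
    match go cs i with
    | [:: c] => c
    | l => Node l
    end
  end.

Definition allowable (t : ptree) (i : nat) : bool :=
  (ideg (lcut t i) + ideg (rcut t i) == ideg t)%N.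

Fixpoint graft (s r : ptree) : ptree :=
  match r with
  | Leaf => s
  | Node [::] => Node [::]
  | Node (c :: cs) => Node (graft s c :: cs)
  end.

Definition GD (t : ptree) (i : nat) : Prop :=
  (1 <= i <= (deg t).-1)%N /\
  exists s r, [/\ valid s, valid r, t = graft s r & deg s = i].

Definition pbool (P : Prop) : bool :=
  if excluded_middle_informative P then true else false.

Inductive lrot : ptree -> ptree -> Prop :=
| lrot_here (cs : seq ptree) (d1 : ptree) (ds : seq ptree) :
    cs <> [::] -> ds <> [::] ->
    lrot (Node (rcons cs (Node (d1 :: ds)))) (Node (Node (rcons cs d1) :: ds))
| lrot_in (l r : seq ptree) (c c' : ptree) :
    lrot c c' -> lrot (Node (l ++ c :: r)) (Node (l ++ c' :: r)).

Definition le_PT (s t : ptree) : Prop := clos_refl_trans ptree lrot s t.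

Fixpoint treesF (fuel n : nat) : seq ptree :=
  match fuel with
  | 0 => [::]
  | f.+1 =>
    if n == 1%N then [:: Leaf] else
    let fix forests (g m : nat) : seq (seq ptree) :=
      match g with
      | 0 => if m == 0%N then [:: [::]] else [::]
      | g'.+1 =>
        if m == 0%N then [:: [::]] else
        flatten [seq [seq t :: fo | t <- treesF f k, fo <- forests g' (m - k)%N]
                | k <- iota 1 m]
      end in
    [seq Node fo | fo <- forests n n & (2 <= size fo)%N]
  end.

Definition trees (n : nat) : seq ptree := treesF n n.

(* TSym: an element is a finite formal combination of the F_t, given  *)
(* as a list of (coefficient, tree); its value is its coefficient     *)
(* function.  Likewise for TSym (x) TSym on pairs of trees.           *)

Section TSym.
Variable K : fieldType.

Definition elt := seq (K * ptree).
Definition elt2 := seq (K * (ptree * ptree)).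

Definition coef (x : elt) (u : ptree) : K :=
  \sum_(p <- x) (p.2 == u)%:R * p.1.
Definition coef2 (x : elt2) (u : ptree * ptree) : K :=
  \sum_(p <- x) (p.2 == u)%:R * p.1.

Definition tens (x y : elt) : elt2 :=
  [seq (p.1 * q.1, (p.2, q.2)) | p <- x, q <- y].

Definition DeltaF (t : ptree) : elt2 :=
  [seq (1, (lcut t i, rcut t i)) | i <- iota 0 (deg t).+1 & allowable t i].

Definition Delta (x : elt) : elt2 :=
  flatten [seq [seq (p.1 * q.1, q.2) | q <- DeltaF p.2] | p <- x].

(* coefficients of Delta_+(x) = Delta(x) - x (x) 1 - 1 (x) x, 1 = F_Leaf *)
Definition coefDeltaPlus (x : elt) (u : ptree * ptree) : K :=
  coef2 (Delta x) u - coef x u.1 * (u.2 == Leaf)%:R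
                    - (u.1 == Leaf)%:R * coef x u.2.

(* Monomial basis: F_s = sum_{t >=_PT s} M_t, i.e.
   M_s = F_s - sum_{t >_PT s} M_t  (recursion on the finite upset). *)
Definition upset_strict (s : ptree) : seq ptree :=
  [seq t <- trees (nleaves s) | pbool (le_PT s t) && (t != s)].

Fixpoint Mrec (fuel : nat) (s : ptree) : elt :=
  match fuel with
  | 0 => [::]
  | f.+1 => (1, s) :: [seq (- p.1, p.2) | p <- flatten [seq Mrec f t | t <- upset_strict s]]
  end.

Definition M (s : ptree) : elt := Mrec (size (trees (nleaves s))).+1 s.

End TSym.

(* Main.v *)
Require Import Defs.
From Stdlib Require Import Relations ClassicalDescription.
From mathcomp Require Import all_boot all_order all_algebra zify.
Set Implicit Arguments. Unset Strict Implicit. Unset Printing Implicit Defensive.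
Import GRing.Theory.

Fixpoint sz (t : ptree) : nat :=
  match t with Leaf => 1 | Node cs => (sumn (map sz cs)).+1 end.

Lemma sumn_map_in (T : eqType) (f : T -> nat) x s : x \in s -> f x <= sumn (map f s).
Proof.
elim: s => //= y s IH; rewrite in_cons => /orP[/eqP->|/IH]; lia.
Qed.

Lemma ptree_ind2 (P : ptree -> Prop) :
  P Leaf -> (forall cs, (forall c, c \in cs -> P c) -> P (Node cs)) -> forall t, P t.
Proof.
move=> hL hN t; move: {2}(sz t) (leqnn (sz t)) => n; elim: n t => [|n IH] [|cs] //=.
move=> hs; apply: hN => c hc; apply: IH.
exact: leq_trans (sumn_map_in sz hc) hs.
Qed.

Definition W (l : seq ptree) := sumn (map nleaves l).
Definition I (l : seq ptree) := sumn (map ideg l).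

Definition contract (l : seq ptree) : ptree :=
  match l with [::] => Node [::] | [:: c] => c | [:: c, p & l1] => Node [:: c, p & l1] end.

Fixpoint lgo (cs : seq ptree) (i : nat) (acc : seq ptree) : seq ptree :=
  match cs with
  | [::] => acc
  | c :: cs' => if (i < nleaves c)%N then rcons acc (lcut c i)
                else lgo cs' (i - nleaves c)%N (rcons acc c)
  end.

Fixpoint rgo (cs : seq ptree) (i : nat) : seq ptree :=
  match cs with
  | [::] => [::]
  | c :: cs' => if (i < nleaves c)%N then rcut c i :: cs'
                else rgo cs' (i - nleaves c)%N
  end.

Lemma lcut_Node cs i : lcut (Node cs) i = contract (lgo cs i [::]).
Proof. reflexivity. Qed.
Lemma rcut_Node cs i : rcut (Node cs) i = contract (rgo cs i).
Proof. reflexivity. Qed.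

Lemma lgo_cat l c r j acc : j < nleaves c ->
  lgo (l ++ c :: r) (W l + j) acc = rcons (acc ++ l) (lcut c j).
Proof.
move=> hj; elim: l acc => [|x l IH] acc /=; first by rewrite /W /= add0n hj cats0.
rewrite /W /= -/(W l) ifN; last lia.
have -> : nleaves x + W l + j - nleaves x = W l + j by lia.
by rewrite IH cat_rcons.
Qed.

Lemma rgo_cat l c r j : j < nleaves c ->
  rgo (l ++ c :: r) (W l + j) = rcut c j :: r.
Proof.
move=> hj; elim: l => [|x l IH] /=; first by rewrite /W /= add0n hj.
rewrite /W /= -/(W l) ifN; last lia.
by have -> : nleaves x + W l + j - nleaves x = W l + j by lia.
Qed.

Lemma lcut_cat l c r j : j < nleaves c ->
  lcut (Node (l ++ c :: r)) (W l + j) = contract (rcons l (lcut c j)).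
Proof. by move=> hj; rewrite lcut_Node lgo_cat. Qed.

Lemma rcut_cat l c r j : j < nleaves c ->
  rcut (Node (l ++ c :: r)) (W l + j) = contract (rcut c j :: r).
Proof. by move=> hj; rewrite rcut_Node rgo_cat. Qed.

Lemma decomp cs i : i < W cs ->
  exists l c r j, [/\ cs = l ++ c :: r, i = W l + j & j < nleaves c].
Proof.
elim: cs i => [|c cs IH] i //=; rewrite /W /= -/(W cs) => hi.
case: (ltnP i (nleaves c)) => h.
  by exists [::], c, cs, i.
have [|l [c' [r [j [e1 e2 e3]]]]] := IH (i - nleaves c); first by move: hi; rewrite /W; lia.
exists (c :: l), c', r, j; split => //; first by rewrite e1.
rewrite /W /= -/(W l); lia.
Qed.

Lemma W_cat l r : W (l ++ r) = W l + W r.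
Proof. by rewrite /W map_cat sumn_cat. Qed.
Lemma I_cat l r : I (l ++ r) = I l + I r.
Proof. by rewrite /I map_cat sumn_cat. Qed.
Lemma W_cons c l : W (c :: l) = nleaves c + W l. Proof. by []. Qed.
Lemma I_cons c l : I (c :: l) = ideg c + I l. Proof. by []. Qed.
Lemma W_rcons l c : W (rcons l c) = W l + nleaves c.
Proof. by rewrite -cats1 W_cat /W /= addn0. Qed.
Lemma I_rcons l c : I (rcons l c) = I l + ideg c.
Proof. by rewrite -cats1 I_cat /I /= addn0. Qed.
Lemma W_nil : W [::] = 0. Proof. by []. Qed.
Lemma I_nil : I [::] = 0. Proof. by []. Qed.

Lemma nleaves_Node cs : nleaves (Node cs) = W cs. Proof. by []. Qed.
Lemma ideg_Node cs : ideg (Node cs) = (I cs).+1. Proof. by []. Qed.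

Lemma valid_Node cs : valid (Node cs) = (2 <= size cs) && all valid cs.
Proof. reflexivity. Qed.

Lemma valid_leaves t : valid t -> 0 < nleaves t.
Proof.
elim/ptree_ind2: t => //= cs IH /andP[hs ha].
case: cs hs ha IH => // c cs _ /= /andP[hc _] IH.
have := IH c (mem_head _ _) hc; lia.
Qed.

Lemma W_ge_size l : all valid l -> size l <= W l.
Proof.
elim: l => //= c l IH /andP[hc hl]; rewrite W_cons; have := valid_leaves hc; have := IH hl; lia.
Qed.

Lemma contract_nleaves l : l != [::] -> nleaves (contract l) = W l.
Proof. by case: l => [|a [|b l]] //= _; rewrite /W /= addn0. Qed.

Lemma contract_valid l : l != [::] -> all valid l -> valid (contract l).
Proof. by case: l => [|a [|b l]] //= _; rewrite andbT. Qed.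

Lemma contract_ideg l : ideg (contract l) = if size l == 1 then I l else (I l).+1.
Proof. by case: l => [|a [|b l]] //=; rewrite /I /= addn0. Qed.

Lemma lcut_Leaf i : lcut Leaf i = Leaf. Proof. by []. Qed.
Lemma rcut_Leaf i : rcut Leaf i = Leaf. Proof. by []. Qed.

Lemma valid_cat l c r : valid (Node (l ++ c :: r)) ->
  [/\ all valid l, valid c, all valid r & 2 <= size l + size r + 1].
Proof.
rewrite valid_Node all_cat /= size_cat /= => /andP[hs /and3P[-> -> ->]]; split => //; lia.
Qed.

Lemma in_mid (l r : seq ptree) c : c \in l ++ c :: r.
Proof. by rewrite mem_cat mem_head orbT. Qed.

Lemma rcons_nn (l : seq ptree) x : rcons l x != [::].
Proof. by apply/eqP => /(congr1 size); rewrite size_rcons. Qed.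

Lemma cut_props t i : valid t -> i < nleaves t ->
  [/\ valid (lcut t i), nleaves (lcut t i) = i.+1,
      valid (rcut t i), nleaves (rcut t i) = nleaves t - i
    & ideg t <= ideg (lcut t i) + ideg (rcut t i)].
Proof.
elim/ptree_ind2: t i => [|cs IH] i.
  by move=> _; rewrite /= ltnS leqn0 => /eqP->.
move=> hv hi; have [l [c [r [j [e1 e2 e3]]]]] := decomp hi; subst cs i.
have [hl hc hr hs] := valid_cat hv.
have [v1 n1 v2 n2 d] := IH c (in_mid l r c) j hc e3.
rewrite lcut_cat // rcut_cat //; split.
- by apply: contract_valid; rewrite ?all_rcons ?hl ?v1 ?rcons_nn.
- rewrite contract_nleaves ?W_rcons ?n1 ?rcons_nn; lia.
- by apply: contract_valid => //=; rewrite v2 hr.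
- rewrite contract_nleaves // W_cons n2 nleaves_Node W_cat W_cons; have := valid_leaves hc; lia.
- rewrite !contract_ideg size_rcons /= I_rcons I_cons ?ideg_Node.
  rewrite -/(I (l ++ c :: r)) I_cat I_cons; clear IH hi hv.
  case: l hs {hl} => [|a l]; case: r {hr} => [|b r] /=; try lia.
Qed.

Lemma allow_cat l c r j : valid (Node (l ++ c :: r)) -> j < nleaves c ->
  allowable (Node (l ++ c :: r)) (W l + j) = allowable c j && ((l == [::]) || (r == [::])).
Proof.
move=> hv hj; have [hl hc hr hs] := valid_cat hv.
have [_ _ _ _ d] := cut_props hc hj.
rewrite /allowable lcut_cat // rcut_cat // !contract_ideg size_rcons /= I_rcons I_cons ?ideg_Node.
rewrite -/(I (l ++ c :: r)) I_cat I_cons; clear hv.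
case: l hs {hl} => [|a l]; case: r {hr} => [|b r] /=; rewrite ?andbT ?andbF /allowable; try (apply/eqP; lia).
all: move=> hs'; try lia; try (apply: negbTE; apply/eqP; lia); apply/eqP/eqP; lia.
Qed.

Lemma contract_big l : 2 <= size l -> contract l = Node l.
Proof. by case: l => [|a [|b l]]. Qed.

Lemma graft_Leaf_l r : graft Leaf r = r.
Proof.
elim/ptree_ind2: r => // [[|c cs]] IH //=; by rewrite IH // mem_head.
Qed.

Lemma graft_props s r : valid s -> valid r ->
  [/\ valid (graft s r), nleaves (graft s r) = nleaves s + nleaves r - 1
    & ideg (graft s r) = ideg s + ideg r].
Proof.
move=> hs; elim/ptree_ind2: r => [|[|c cs] IH] hr.
- by split => //=; lia.
- by [].
have [v n d] := IH c (mem_head _ _) (andP (andP hr).2).1.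
move: hr; rewrite /= => /andP[hz /andP[hc hcs]]; split => /=.
- by rewrite hz v hcs.
- have := valid_leaves hc; have := valid_leaves hs; rewrite n; lia.
- rewrite d; lia.
Qed.

Lemma full_cut t : valid t -> lcut t (deg t) = t /\ rcut t (deg t) = Leaf.
Proof.
elim/ptree_ind2: t => // cs IH hv.
case/lastP: cs IH hv => [|l c] IH hv; first by [].
have hv' := hv; rewrite -cats1 in hv'; have [hl hc _ hs] := valid_cat hv'.
have hcin : c \in rcons l c by rewrite mem_rcons mem_head.
have [e1 e2] := IH c hcin hc.
have hc0 := valid_leaves hc.
have -> : deg (Node (rcons l c)) = W l + deg c.
  rewrite /deg nleaves_Node W_rcons; lia.
rewrite -cats1 lcut_cat ?rcut_cat /deg; try lia.
rewrite -/(deg c) e1 e2 /= contract_big ?cats1 // size_rcons; move: hs => /=; lia.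
Qed.

Lemma cut_graft s r : valid s -> valid r ->
  lcut (graft s r) (deg s) = s /\ rcut (graft s r) (deg s) = r.
Proof.
move=> hs; elim/ptree_ind2: r => [|[|c cs] IH] hr.
- exact: full_cut.
- by [].
have hr' := hr; move: hr' => /= /andP[hz /andP[hc hcs]].
have [v n _] := graft_props hs hc.
have hj : deg s < nleaves (graft s c).
  rewrite n /deg; have := valid_leaves hc; have := valid_leaves hs; lia.
have [e1 e2] := IH c (mem_head _ _) hc.
have := @lcut_cat [::] (graft s c) cs _ hj; have := @rcut_cat [::] (graft s c) cs _ hj.
rewrite /= /W /= add0n => -> ->; rewrite e1 e2; split => //.
by case: cs hz {IH hr hcs}.
Qed.

Lemma lrot_props s t : lrot s t ->
  [/\ nleaves t = nleaves s, ideg t = ideg s & valid s -> valid t].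
Proof.
elim=> {s t} [cs d1 ds hcs hds | l r c c' _ [n d v]].
- rewrite !nleaves_Node !W_cons !nleaves_Node !W_rcons !nleaves_Node W_cons.
  rewrite !ideg_Node !I_cons !ideg_Node !I_rcons !ideg_Node I_cons.
  split; try lia.
  rewrite !valid_Node /= !all_rcons /= size_rcons.
  case/andP => _ /andP[/andP[hds2 /andP[hd1 hdsv]] hcsv]; rewrite hd1 hdsv hcsv.
  rewrite hds2 size_rcons; by case: cs hcs {hcsv}.
- rewrite !nleaves_Node !ideg_Node !W_cat !W_cons !n.
  change (sumn (map ideg (l ++ c' :: r))) with (I (l ++ c' :: r)).
  change (sumn (map ideg (l ++ c :: r))) with (I (l ++ c :: r)).
  rewrite !I_cat !I_cons d; split => //.
  rewrite !valid_Node !size_cat /= !all_cat /= => /andP[-> /and3P[-> /v -> ->]].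
  by [].
Qed.

Lemma le_props s t : le_PT s t ->
  [/\ nleaves t = nleaves s, ideg t = ideg s & valid s -> valid t].
Proof.
elim=> {s t} [s t /lrot_props //| s | s t u _ [n1 d1 v1] _ [n2 d2 v2]].
- by [].
- by split; [rewrite n2 | rewrite d2 | move=> /v1 /v2].
Qed.

Lemma le_refl s : le_PT s s. Proof. exact: rt_refl. Qed.
Lemma le_trans s t u : le_PT s t -> le_PT t u -> le_PT s u.
Proof. exact: rt_trans. Qed.
Lemma le_step s t : lrot s t -> le_PT s t. Proof. exact: rt_step. Qed.

Lemma le_ctx l r c c' : le_PT c c' -> le_PT (Node (l ++ c :: r)) (Node (l ++ c' :: r)).
Proof.
elim=> {c c'} [c c' h| c | a b d _ h1 _ h2].
- by apply: le_step; apply: lrot_in.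
- exact: le_refl.
- exact: le_trans h1 h2.
Qed.

Lemma le_ctx_rcons l c c' : le_PT c c' -> le_PT (Node (rcons l c)) (Node (rcons l c')).
Proof. by rewrite -!cats1; apply: le_ctx. Qed.
Lemma le_ctx_cons r c c' : le_PT c c' -> le_PT (Node (c :: r)) (Node (c' :: r)).
Proof. exact: (@le_ctx [::]). Qed.

Lemma le_contract_rcons l c c' : le_PT c c' ->
  le_PT (contract (rcons l c)) (contract (rcons l c')).
Proof.
case: l => [|a l] h; first exact: h.
rewrite !(@contract_big (rcons (a :: l) _)) ?size_rcons //; exact: le_ctx_rcons.
Qed.

Lemma le_contract_cons r c c' : le_PT c c' ->
  le_PT (contract (c :: r)) (contract (c' :: r)).
Proof.
case: r => [|a r] h; first exact: h.
rewrite !(@contract_big (_ :: a :: r)) //; exact: le_ctx_cons.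
Qed.

Lemma D_lemma l x y : l != [::] -> valid y ->
  le_PT (Node (rcons l (graft x y))) (graft (Node (rcons l x)) y).
Proof.
move=> hl; elim/ptree_ind2: y => [|[|d1 ds] IH] hy.
- exact: le_refl.
- by [].
move: hy => /= /andP[hz /andP[hd1 hds]].
apply: le_trans; last first.
  apply: le_ctx_cons; exact: IH (mem_head _ _) hd1.
apply: le_step; apply: lrot_here.
- by move=> e; move: hl; rewrite e.
- by move=> e; move: hz; rewrite e.
Qed.

Lemma allow_le t i : valid t -> i < nleaves t -> allowable t i ->
  le_PT t (graft (lcut t i) (rcut t i)).
Proof.
elim/ptree_ind2: t i => [|cs IH] i.
  by move=> _; rewrite /= ltnS leqn0 => /eqP-> _; exact: le_refl.
move=> hv hi; have [l [c [r [j [e1 e2 e3]]]]] := decomp hi; subst cs i.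
have [hl hc hr hs] := valid_cat hv.
rewrite allow_cat // => /andP[ha /orP[/eqP el|/eqP er]].
- subst l; rewrite lcut_cat // rcut_cat //=.
  have := IH c (in_mid _ _ _) j hc e3 ha.
  case: r {IH hv hi hr} hs => [//|r0 r] _ h /=; exact: le_ctx_cons.
- subst r; rewrite lcut_cat // rcut_cat //.
  have hl0 : l != [::] by apply/eqP => el; move: hs; rewrite el.
  rewrite (@contract_big (rcons l _)) ?size_rcons; last by move: hs => /=; lia.
  rewrite [contract [:: _]]/= cats1.
  apply: le_trans (le_ctx_rcons l (IH c (in_mid _ _ _) j hc e3 ha)) _.
  apply: D_lemma => //; have [_ _ v _ _] := cut_props hc e3; exact: v.
Qed.

Lemma lrot_graft_l a a' b : lrot a a' -> le_PT (graft a b) (graft a' b).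
Proof.
move=> h; elim/ptree_ind2: b => [|[|c cs] IH] /=.
- exact: le_step.
- exact: le_refl.
- apply: le_ctx_cons; exact: IH (mem_head _ _).
Qed.

Lemma le_graft_l a a' b : le_PT a a' -> le_PT (graft a b) (graft a' b).
Proof.
elim=> {a a'} [a a' h| a | x y z _ h1 _ h2].
- exact: lrot_graft_l.
- exact: le_refl.
- exact: le_trans h1 h2.
Qed.

Lemma lrot_graft_r a b b' : lrot b b' -> le_PT (graft a b) (graft a b').
Proof.
elim=> {b b'} [cs d1 ds hcs hds| l r c c' h IH].
- case: cs hcs => [//|c0 cs] _ /=; apply: le_step.
  exact: (@lrot_here (graft a c0 :: cs) d1 ds).
- case: l => [|l0 l] /=.
  + exact: le_ctx_cons.
  + apply: le_step; exact: (@lrot_in (graft a l0 :: l) r c c').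
Qed.

Lemma le_graft_r a b b' : le_PT b b' -> le_PT (graft a b) (graft a b').
Proof.
elim=> {b b'} [b b' h| b | x y z _ h1 _ h2].
- exact: lrot_graft_r.
- exact: le_refl.
- exact: le_trans h1 h2.
Qed.

Lemma C_dir t i a b : valid t -> i < nleaves t -> allowable t i ->
  le_PT (lcut t i) a -> le_PT (rcut t i) b -> le_PT t (graft a b).
Proof.
move=> hv hi ha h1 h2.
apply: le_trans (allow_le hv hi ha) _.
apply: le_trans (le_graft_l _ h1) _.
exact: le_graft_r.
Qed.

Lemma lcut_cat0 c r j : j < nleaves c -> lcut (Node (c :: r)) j = contract (lcut c j :: nil).
Proof. by move=> h; have := @lcut_cat [::] c r j h; rewrite /W /= add0n. Qed.
Lemma rcut_cat0 c r j : j < nleaves c -> rcut (Node (c :: r)) j = contract (rcut c j :: r).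
Proof. by move=> h; have := @rcut_cat [::] c r j h; rewrite /W /= add0n. Qed.
Lemma allow_cat0 c r j : valid (Node (c :: r)) -> j < nleaves c ->
  allowable (Node (c :: r)) j = allowable c j.
Proof.
by move=> hv h; have := @allow_cat [::] c r j hv h; rewrite /W /= add0n andbT.
Qed.

Lemma cat_cons_nil (l r : seq ptree) c : (l ++ c :: r == [::]) = false.
Proof. by case: l. Qed.
Lemma rcons_nil' (l : seq ptree) c : (rcons l c == [::]) = false.
Proof. by case: l. Qed.

Lemma valid_rcons l c : valid (Node (rcons l c)) -> [/\ all valid l, valid c & 1 <= size l].
Proof. by rewrite -cats1 => /valid_cat[a b _ d]; split => //; move: d => /=; lia. Qed.

Lemma lrot_cut t t1 i : lrot t t1 -> valid t -> i < nleaves t -> allowable t1 i ->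
  [/\ allowable t i, le_PT (lcut t i) (lcut t1 i) & le_PT (rcut t i) (rcut t1 i)].
Proof.
move=> h; elim: h i => {t t1} [cs d1 ds hcs hds | l r c c' h IH] i hv hi ha.
- have [hcsv hy hcs1] := valid_rcons hv.
  case/andP: (hy) => hds1 /andP[hd1 hdsv].
  have hv1 : valid (Node (Node (rcons cs d1) :: ds)).
    by have [_ _ ] := lrot_props (lrot_here d1 hcs hds); apply.
  have hz : valid (Node (rcons cs d1)) by case/andP: (hv1) => _ /andP[].
  have hd0 := valid_leaves hd1.
  have hi' : i < W cs + nleaves d1 + W ds.
    by move: hi; rewrite nleaves_Node W_rcons nleaves_Node W_cons; lia.
  case: (ltnP i (W cs)) => h1.
  +
    have [l [c [r [j [e1 e2 e3]]]]] := decomp h1; subst cs i.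
    have hzi : W l + j < nleaves (Node (rcons (l ++ c :: r) d1)).
      rewrite nleaves_Node W_rcons W_cat W_cons; lia.
    have hz' : valid (Node (l ++ c :: rcons r d1)) by rewrite -rcons_cons -rcons_cat.
    move: ha; rewrite allow_cat0 // rcons_cat allow_cat // rcons_nil' orbF.
    case/andP => hac /eqP el; subst l.
    have hv' : valid (Node ([::] ++ c :: rcons r (Node (d1 :: ds)))) by exact: hv.
    have e0 : W [::] + j = j by rewrite /W add0n.
    rewrite !cat0s e0 !rcons_cons in hv hi hzi hz' hv' *.
    rewrite !lcut_cat0 // !rcut_cat0 // allow_cat0 // hac; split => //.
    * exact: le_refl.
    * have s1 : 2 <= size (rcut c j :: rcons r d1) by rewrite /= size_rcons.
      have s2 : 2 <= size (rcut c j :: rcons r (Node (d1 :: ds))) by rewrite /= size_rcons.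
      rewrite (contract_big s1) (contract_big s2) contract_big //.
      apply: le_step; exact: (@lrot_here (rcut c j :: r) d1 ds).
  case: (ltnP i (W cs + nleaves d1)) => h2.
  +
    have [j ej] : exists j, i = W cs + j by exists (i - W cs); lia.
    subst i.
    have hj : j < nleaves d1 by lia.
    have hjy : j < nleaves (Node (d1 :: ds)) by rewrite nleaves_Node W_cons; lia.
    have hzi : W cs + j < nleaves (Node (cs ++ [:: d1])) by rewrite nleaves_Node W_cat W_cons; lia.
    have hv' : valid (Node (cs ++ Node (d1 :: ds) :: [::])) by rewrite cats1.
    have hz' : valid (Node (cs ++ d1 :: [::])) by rewrite cats1.
    have hv1' : valid (Node (Node (cs ++ [:: d1]) :: ds)) by rewrite cats1.
    move: ha; rewrite -!cats1 (allow_cat0 hv1' hzi) (@allow_cat cs d1 [::] j hz' hj) orbT andbT => ha.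
    rewrite (@allow_cat cs _ [::] j hv' hjy) orbT andbT (allow_cat0 hy hj) ha; split => //.
    * rewrite (@lcut_cat cs _ [::] j hjy) (lcut_cat0 _ hj) (lcut_cat0 _ hzi) (@lcut_cat cs d1 [::] j hj).
      exact: le_refl.
    * rewrite (@rcut_cat cs _ [::] j hjy) (rcut_cat0 _ hj) (rcut_cat0 _ hzi) (@rcut_cat cs d1 [::] j hj).
      exact: le_refl.
  +
    have h3 : i - W cs - nleaves d1 < W ds by lia.
    have [l [c [r [j [e1 e2 e3]]]]] := decomp h3; subst ds.
    have ei : i = W cs + (W (d1 :: l) + j) by rewrite W_cons; lia.
    subst i.
    have ei2 : W cs + (W (d1 :: l) + j) = W (Node (rcons cs d1) :: l) + j.
      by rewrite !W_cons nleaves_Node W_rcons; lia.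
    have hjy : W (d1 :: l) + j < nleaves (Node ((d1 :: l) ++ c :: r)).
      by rewrite nleaves_Node W_cat !W_cons; lia.
    have hy' : valid (Node ((d1 :: l) ++ c :: r)) by exact: hy.
    have hv' : valid (Node (cs ++ Node ((d1 :: l) ++ c :: r) :: [::])) by rewrite cats1.
    have hv1' : valid (Node ((Node (rcons cs d1) :: l) ++ c :: r)) by exact: hv1.
    have Ey : Node (d1 :: l ++ c :: r) = Node ((d1 :: l) ++ c :: r) by [].
    have Et1 : Node (Node (rcons cs d1) :: l ++ c :: r) = Node ((Node (rcons cs d1) :: l) ++ c :: r) by [].
    have AL : allowable (Node (rcons cs (Node (d1 :: l ++ c :: r)))) (W cs + (W (d1 :: l) + j))
            = allowable c j && (r == [::]).
      rewrite -cats1 Ey (@allow_cat cs _ [::] _ hv' hjy) orbT andbT.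
      by rewrite (@allow_cat (d1 :: l) c r j hy' e3).
    have AL1 : allowable (Node (Node (rcons cs d1) :: l ++ c :: r)) (W cs + (W (d1 :: l) + j))
            = allowable c j && (r == [::]).
      by rewrite ei2 Et1 (@allow_cat (Node (rcons cs d1) :: l) c r j hv1' e3).
    move: ha; rewrite AL1 => ha; rewrite AL ha; split => //.
    * have LT : lcut (Node (rcons cs (Node (d1 :: l ++ c :: r)))) (W cs + (W (d1 :: l) + j))
             = Node (rcons cs (Node (d1 :: rcons l (lcut c j)))).
        rewrite -cats1 Ey (@lcut_cat cs _ [::] _ hjy) (@lcut_cat (d1 :: l) c r j e3).
        rewrite (@contract_big (rcons (d1 :: l) _)) ?size_rcons //.
        rewrite contract_big; first by []. by rewrite size_rcons; move: hcs1; clear; lia.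
      have LT1 : lcut (Node (Node (rcons cs d1) :: l ++ c :: r)) (W cs + (W (d1 :: l) + j))
             = Node (Node (rcons cs d1) :: rcons l (lcut c j)).
        by rewrite ei2 Et1 (@lcut_cat (Node (rcons cs d1) :: l) c r j e3) contract_big // size_rcons.
      rewrite LT LT1; apply: le_step; apply: (@lrot_here cs d1 (rcons l (lcut c j))) => //; by move=> /eqP; rewrite rcons_nil'.
    * have RT : rcut (Node (rcons cs (Node (d1 :: l ++ c :: r)))) (W cs + (W (d1 :: l) + j))
             = contract (rcut c j :: r).
        by rewrite -cats1 Ey (@rcut_cat cs _ [::] _ hjy) (@rcut_cat (d1 :: l) c r j e3).
      have RT1 : rcut (Node (Node (rcons cs d1) :: l ++ c :: r)) (W cs + (W (d1 :: l) + j))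
             = contract (rcut c j :: r).
        by rewrite ei2 Et1 (@rcut_cat (Node (rcons cs d1) :: l) c r j e3).
      rewrite RT RT1; exact: le_refl.
-
  have [hn hd hvv] := lrot_props h.
  have [hl hc hr hs] := valid_cat hv.
  have hc' := hvv hc.
  have hv1 : valid (Node (l ++ c' :: r)).
    by have [_ _ ] := lrot_props (lrot_in l r h); apply.
  have hi' : i < W l + nleaves c + W r by move: hi; rewrite nleaves_Node W_cat W_cons; lia.
  case: (ltnP i (W l)) => h1.
  + have [l1 [e [l2 [j [e1 e2 e3]]]]] := decomp h1; subst l i.
    have E1 : forall x, Node ((l1 ++ e :: l2) ++ x :: r) = Node (l1 ++ e :: (l2 ++ x :: r)).
      by move=> x; rewrite -catA.
    rewrite E1 in hv; rewrite E1 in hv1; rewrite E1 in ha; rewrite !E1.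
    move: ha; rewrite (@allow_cat l1 e (l2 ++ c' :: r) j hv1 e3) cat_cons_nil => ha.
    rewrite (@allow_cat l1 e (l2 ++ c :: r) j hv e3) cat_cons_nil ha; split => //.
    * rewrite (@lcut_cat l1 e (l2 ++ c :: r) j e3) (@lcut_cat l1 e (l2 ++ c' :: r) j e3).
      exact: le_refl.
    * rewrite (@rcut_cat l1 e (l2 ++ c :: r) j e3) (@rcut_cat l1 e (l2 ++ c' :: r) j e3).
      rewrite !contract_big; try by case: (l2).
      exact: (@le_ctx (rcut e j :: l2) r c c' (le_step h)).
  case: (ltnP i (W l + nleaves c)) => h2.
  + have [j ej] : exists j, i = W l + j by exists (i - W l); lia.
    subst i.
    have hj : j < nleaves c by lia.
    have hj' : j < nleaves c' by rewrite hn.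
    move: ha; rewrite (@allow_cat l c' r j hv1 hj') => /andP[ha hb].
    have [a1 a2 a3] := IH j hc hj ha.
    rewrite (@allow_cat l c r j hv hj) a1 hb; split => //.
    * rewrite (@lcut_cat l c r j hj) (@lcut_cat l c' r j hj'); exact: le_contract_rcons.
    * rewrite (@rcut_cat l c r j hj) (@rcut_cat l c' r j hj'); exact: le_contract_cons.
  + have h3 : i - W l - nleaves c < W r by lia.
    have [r1 [e [r2 [j [e1 e2 e3]]]]] := decomp h3; subst r.
    have ei : i = W (l ++ c :: r1) + j by rewrite W_cat W_cons; lia.
    have ei' : i = W (l ++ c' :: r1) + j by rewrite W_cat W_cons hn; lia.
    have E1 : forall x, Node (l ++ x :: r1 ++ e :: r2) = Node ((l ++ x :: r1) ++ e :: r2).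
      by move=> x; rewrite -catA.
    rewrite E1 in hv; rewrite E1 in hv1; rewrite E1 in ha; rewrite !E1.
    move: ha; rewrite {1}ei' (@allow_cat (l ++ c' :: r1) e r2 j hv1 e3) cat_cons_nil => ha.
    rewrite {1}ei (@allow_cat (l ++ c :: r1) e r2 j hv e3) cat_cons_nil ha; split => //.
    * rewrite {1}ei (@lcut_cat (l ++ c :: r1) e r2 j e3).
      rewrite ei' (@lcut_cat (l ++ c' :: r1) e r2 j e3).
      rewrite !contract_big ?size_rcons ?size_cat //= ?addnS //.
      rewrite !rcons_cat !rcons_cons; exact: le_ctx (le_step h).
    * rewrite {1}ei (@rcut_cat (l ++ c :: r1) e r2 j e3).
      rewrite ei' (@rcut_cat (l ++ c' :: r1) e r2 j e3); exact: le_refl.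
Qed.

Lemma B_dir t a b : valid t -> valid a -> valid b -> le_PT t (graft a b) ->
  [/\ allowable t (deg a), le_PT (lcut t (deg a)) a & le_PT (rcut t (deg a)) b].
Proof.
move=> hv ha hb /clos_rt_rt1n_iff h.
remember (graft a b) as t' eqn:E.
induction h as [x | x y z hxy hyz IH].
- subst x; have [e1 e2] := cut_graft ha hb.
  have [_ _ d] := graft_props ha hb.
  rewrite /allowable e1 e2 d eqxx; split => //; exact: le_refl.
- have [hn _ hvv] := lrot_props hxy.
  have [a1 a2 a3] := IH (hvv hv) E.
  have hi : deg a < nleaves x.
    have [hz _ _] := le_props (clos_rt1n_rt _ _ _ _ hyz).
    have [_ hn' _] := graft_props ha hb.
    rewrite -hn -hz E hn' /deg; have := valid_leaves ha; have := valid_leaves hb; lia.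
  have [c1 c2 c3] := lrot_cut hxy hv hi a1.
  split => //; [exact: le_trans c2 a2 | exact: le_trans c3 a3].
Qed.

Fixpoint wt (t : ptree) : nat :=
  match t with Leaf => 1 | Node cs => sumn (map wt cs) + (size cs == 0) end.

Definition Wt (l : seq ptree) := sumn (map wt l).

Fixpoint cross (cs : seq ptree) : nat :=
  match cs with [::] => 0 | c :: cs' => wt c * I cs' + cross cs' end.

Fixpoint pot (t : ptree) : nat :=
  match t with Leaf => 0 | Node cs => sumn (map pot cs) + cross cs end.

Definition Pt (l : seq ptree) := sumn (map pot l).

Lemma pot_Node cs : pot (Node cs) = Pt cs + cross cs. Proof. by []. Qed.
Lemma wt_Node cs : cs != [::] -> wt (Node cs) = Wt cs.
Proof. by case: cs => //= c cs _; rewrite addn0. Qed.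

Lemma Wt_cat l r : Wt (l ++ r) = Wt l + Wt r.
Proof. by rewrite /Wt map_cat sumn_cat. Qed.
Lemma Pt_cat l r : Pt (l ++ r) = Pt l + Pt r.
Proof. by rewrite /Pt map_cat sumn_cat. Qed.
Lemma Wt_cons c l : Wt (c :: l) = wt c + Wt l. Proof. by []. Qed.
Lemma Pt_cons c l : Pt (c :: l) = pot c + Pt l. Proof. by []. Qed.
Lemma Wt_rcons l c : Wt (rcons l c) = Wt l + wt c.
Proof. by rewrite -cats1 Wt_cat /Wt /= addn0. Qed.
Lemma Pt_rcons l c : Pt (rcons l c) = Pt l + pot c.
Proof. by rewrite -cats1 Pt_cat /Pt /= addn0. Qed.

Lemma cross_cat l r : cross (l ++ r) = cross l + cross r + Wt l * I r.
Proof.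
elim: l => [|c l IH] /=; first by rewrite /Wt /= mul0n addn0.
rewrite IH I_cat Wt_cons; lia.
Qed.
Lemma cross_cons c r : cross (c :: r) = wt c * I r + cross r. Proof. by []. Qed.
Lemma cross_rcons l c : cross (rcons l c) = cross l + Wt l * ideg c.
Proof. by rewrite -cats1 cross_cat /= /I /= !addn0 muln0 addn0. Qed.

Lemma wt_pos t : 0 < wt t.
Proof.
elim/ptree_ind2: t => // [[|c cs]] IH //=.
have := IH c (mem_head _ _); lia.
Qed.

Lemma Wt_pos l : l != [::] -> 0 < Wt l.
Proof. case: l => //= c l _; rewrite Wt_cons; have := wt_pos c; lia. Qed.

Lemma lrot_pot s t : lrot s t -> wt t = wt s /\ pot t < pot s.
Proof.
elim=> {s t} [cs d1 ds hcs hds | l r c c' h [hw hp]].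
- have hcs' : cs != [::] by apply/eqP.
  have hds' : ds != [::] by apply/eqP.
  have hw := Wt_pos hcs'.
  rewrite !wt_Node ?rcons_nil' //.
  have e1 : wt (Node (rcons cs d1)) = Wt cs + wt d1 by rewrite wt_Node ?rcons_nn // Wt_rcons.
  have e2 : wt (Node (d1 :: ds)) = wt d1 + Wt ds by rewrite wt_Node.
  rewrite Wt_cons Wt_rcons e1 e2; split; first lia.
  rewrite !pot_Node Pt_cons Pt_rcons !pot_Node cross_cons cross_rcons e1.
  rewrite Pt_rcons cross_rcons Pt_cons cross_cons ideg_Node I_cons; nia.
- have [_ hd _] := lrot_props h.
  rewrite !wt_Node ?cat_cons_nil //; split.
    by rewrite !Wt_cat !Wt_cons hw.
  rewrite !pot_Node !Pt_cat !Pt_cons !cross_cat !cross_cons !I_cons hd hw; nia.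
Qed.

Lemma le_pot s t : le_PT s t -> pot t <= pot s /\ (pot t = pot s -> t = s).
Proof.
elim=> {s t} [s t /lrot_pot [_ h]| s | x y z _ [h1 e1] _ [h2 e2]].
- by split; [lia | move=> e; lia].
- by [].
- split; first lia.
  move=> e; have ey : pot y = pot x by lia.
  have ez : pot z = pot y by lia.
  by rewrite (e2 ez) (e1 ey).
Qed.

Definition forestsF (tr : nat -> seq ptree) : nat -> nat -> seq (seq ptree) :=
  fix forests (g m : nat) {struct g} : seq (seq ptree) :=
  match g with
  | 0 => if m == 0%N then [:: [::]] else [::]
  | g'.+1 =>
    if m == 0%N then [:: [::]] else
    flatten [seq [seq t :: fo | t <- tr k, fo <- forests g' (m - k)%N]
            | k <- iota 1 m]
  end.

Lemma forestsF_0 tr m : forestsF tr 0 m = if m == 0%N then [:: [::]] else [::].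
Proof. reflexivity. Qed.
Lemma forestsF_S tr g m : forestsF tr g.+1 m =
    if m == 0%N then [:: [::]] else
    flatten [seq [seq t :: fo | t <- tr k, fo <- forestsF tr g (m - k)%N]
            | k <- iota 1 m].
Proof. reflexivity. Qed.

Lemma treesF_S f n : treesF f.+1 n =
  if n == 1%N then [:: Leaf] else [seq Node fo | fo <- forestsF (treesF f) n n & (2 <= size fo)%N].
Proof. reflexivity. Qed.

Lemma forests_sound (tr : nat -> seq ptree) g m fo :
  (forall k t, t \in tr k -> valid t /\ nleaves t = k) ->
  fo \in forestsF tr g m -> all valid fo /\ W fo = m.
Proof.
move=> htr; elim: g m fo => [|g IH] m fo; rewrite ?forestsF_0 ?forestsF_S.
  by case: (m =P 0) => [->|] //; rewrite inE => /eqP->.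
case: (m =P 0) => [->|hm]; first by rewrite inE => /eqP->.
case/flattenP => L /mapP[k]; rewrite mem_iota => hk ->.
case/allpairsP => [[t fo'] [/= ht hfo ->]].
have [vt nt] := htr _ _ ht; have [v2 n2] := IH _ _ hfo.
rewrite /= vt v2 W_cons nt n2; split => //; lia.
Qed.

Lemma treesF_sound f n t : t \in treesF f n -> valid t /\ nleaves t = n.
Proof.
elim: f n t => [//|f IH] n t; rewrite treesF_S.
case: (n =P 1) => [->|hn]; first by rewrite inE => /eqP->.
case/mapP => fo; rewrite mem_filter => /andP[hs hfo] ->.
have [v w] := forests_sound (fun k t h => IH k t h) hfo.
by rewrite valid_Node hs v.
Qed.

Lemma forests_complete (tr : nat -> seq ptree) g m fo :
  size fo <= g -> (forall c, c \in fo -> 0 < nleaves c /\ c \in tr (nleaves c)) ->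
  W fo = m -> fo \in forestsF tr g m.
Proof.
elim: g m fo => [|g IH] m [|c fo]; rewrite ?forestsF_0 ?forestsF_S //=.
- by move=> _ _ <-; rewrite W_nil eqxx inE.
- by move=> _ _ <-; rewrite W_nil eqxx inE.
move=> hs hin hw.
have [hc1 hc2] := hin c (mem_head _ _).
rewrite W_cons in hw.
case: (m =P 0) => [e|hm]; first by lia.
apply/flattenP; exists [seq t :: fo0 | t <- tr (nleaves c), fo0 <- forestsF tr g (m - nleaves c)].
  apply/mapP; exists (nleaves c) => //; rewrite mem_iota; lia.
apply/allpairsP; exists (c, fo) => /=; split => //.
apply: IH => //.
  by move=> x hx; apply: hin; rewrite inE hx orbT.
lia.
Qed.

Lemma in_size (T : eqType) (x : T) s : x \in s -> 0 < size s.
Proof. by case: s. Qed.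

Lemma child_lt c cs : c \in cs -> all valid cs -> nleaves c + (size cs).-1 <= W cs.
Proof.
elim: cs => [//|x cs IH]; rewrite inE => /orP[/eqP->|hc] /andP[hx ha] /=; rewrite W_cons.
  by have := W_ge_size ha; lia.
move: (IH hc ha) (valid_leaves hx) (in_size hc); case: (size cs) => [|k] //=; lia.
Qed.

Lemma treesF_complete f t : valid t -> nleaves t <= f -> t \in treesF f (nleaves t).
Proof.
elim: f t => [|f IH] t hv hn; first by have := valid_leaves hv; lia.
rewrite treesF_S; case: t hv hn => [|cs] hv hn; first by rewrite eqxx inE.
move: (hv); rewrite valid_Node => /andP[hs ha].
have hW := W_ge_size ha.
rewrite nleaves_Node in hn *.
have -> : (W cs == 1) = false by apply/eqP; lia.
apply/mapP; exists cs => //; rewrite mem_filter hs /=.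
apply: forests_complete => //.
move=> c hc; have hcv : valid c := allP ha c hc.
split; first exact: valid_leaves.
apply: IH => //.
move: hs (child_lt hc ha); case: (size cs) => [|k] /=; lia.
Qed.

Lemma trees_complete t : valid t -> t \in trees (nleaves t).
Proof. by move=> hv; apply: treesF_complete. Qed.

Lemma trees_sound n t : t \in trees n -> valid t /\ nleaves t = n.
Proof. exact: treesF_sound. Qed.

Lemma uniq_flatten_map (T : eqType) (f : nat -> seq T) s :
  uniq s -> (forall k, uniq (f k)) ->
  (forall k k' x, x \in f k -> x \in f k' -> k = k') -> uniq (flatten (map f s)).
Proof.
move=> us uf hd; elim: s us => [//|k s IH] /= /andP[hk us].
rewrite cat_uniq uf IH // andbT /=.
apply/hasP => [[x /flattenP[L /mapP[k' hk' ->] hx] hx']].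
have e := hd _ _ _ hx' hx; subst k'.
by rewrite hk' in hk.
Qed.

Lemma forests_uniq (tr : nat -> seq ptree) g m :
  (forall k, uniq (tr k)) -> (forall k t, t \in tr k -> nleaves t = k) ->
  uniq (forestsF tr g m).
Proof.
move=> hu hs; elim: g m => [|g IH] m; rewrite ?forestsF_0 ?forestsF_S.
  by case: (m == 0).
case: (m == 0) => //.
apply: uniq_flatten_map; first exact: iota_uniq.
- move=> k; apply: allpairs_uniq => //.
  by move=> [a b] [c d] _ _ /= [-> ->].
- move=> k k' x /allpairsP[[a b] [/= ha _ ->]] /allpairsP[[c d] [/= hc _ [e1 _]]].
  by rewrite -(hs _ _ ha) -(hs _ _ hc) e1.
Qed.

Lemma treesF_uniq f n : uniq (treesF f n).
Proof.
elim: f n => [//|f IH] n; rewrite treesF_S.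
case: (n == 1) => //.
rewrite map_inj_uniq; last by move=> x y [].
apply: filter_uniq; apply: forests_uniq => // k t ht.
by have [] := treesF_sound ht.
Qed.

Lemma trees_uniq n : uniq (trees n). Proof. exact: treesF_uniq. Qed.

Lemma pboolP (P : Prop) : reflect P (pbool P).
Proof. by rewrite /pbool; case: excluded_middle_informative => h; constructor. Qed.

Lemma count_lt (T : eqType) (P Q : pred T) (l : seq T) x0 :
  (forall x, P x -> Q x) -> x0 \in l -> Q x0 -> ~~ P x0 -> count P l < count Q l.
Proof.
move=> hPQ; elim: l => [//|y l IH]; rewrite inE => /orP[/eqP<-|hx] hq hp /=.
  rewrite (negbTE hp) hq /=.
  have : count P l <= count Q l by apply: sub_count.
  lia.
have := IH hx hq hp; case: (P y) (hPQ y) => /=; case: (Q y) => //= h; try lia.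
Qed.

Lemma US_mem s t : t \in upset_strict s ->
  [/\ le_PT s t, t != s, nleaves t = nleaves s & t \in trees (nleaves s)].
Proof.
rewrite mem_filter => /andP[/andP[/pboolP h1 h2] h3]; split => //.
by have [] := trees_sound h3.
Qed.

Definition B (s : ptree) := (count (fun y => pot y < pot s) (trees (nleaves s))).+1.

Lemma fuel K s f f' : B s <= f -> B s <= f' -> Mrec K f s = Mrec K f' s.
Proof.
move: {2}(pot s) (leqnn (pot s)) => n; elim: n s f f' => [|n IH] s f f' hn.
  all: case: f => // f; case: f' => // f' hf hf' /=; congr cons; congr map; congr flatten.
  all: apply/eq_in_map => t /US_mem [hle hne hnl hin].
  all: have [hp1 hp2] := le_pot hle.
  all: have hlt : pot t < pot s by (rewrite ltn_neqAle hp1 andbT; apply/eqP => e; move: hne; rewrite (hp2 e) eqxx).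
  all: have hB : B t <= B s - 1
         by (rewrite /B hnl /= subn1 /=; apply: count_lt hin _ _ => //= [x h|]; [lia | rewrite ltnn]).
  - lia.
  all: apply: IH; lia.
Qed.

Section Alg.
Variable K : fieldType.
Local Open Scope ring_scope.

Lemma Mrec_S f s : Mrec K f.+1 s = (1, s) :: [seq (- p.1, p.2) | p <- flatten [seq Mrec K f t | t <- upset_strict s]].
Proof. by []. Qed.

Lemma M_rec s : M K s = (1, s) :: [seq (- p.1, p.2) | p <- flatten [seq M K t | t <- upset_strict s]].
Proof.
rewrite {1}/M Mrec_S; congr cons; congr map; congr flatten.
apply/eq_in_map => t /US_mem [hle hne hnl hin].
have : (count (fun y => pot y < pot t) (trees (nleaves s)) < count predT (trees (nleaves s)))%N.
  by apply: (count_lt (x0 := t)) => //; rewrite ltnn.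
rewrite count_predT => hb.
rewrite /M hnl; apply: fuel; rewrite /B hnl; [exact: hb | exact: ltnW hb].
Qed.

Definition ev (x : elt K) (h : ptree -> K) : K := \sum_(p <- x) p.1 * h p.2.

Lemma ev_M s h : ev (M K s) h = h s - \sum_(t <- upset_strict s) ev (M K t) h.
Proof.
rewrite M_rec /ev big_cons mul1r big_map big_flatten /= big_map.
congr (_ + _); rewrite -sumrN; apply: eq_bigr => t _; rewrite -sumrN; apply: eq_bigr => p _.
by rewrite mulNr.
Qed.

Lemma coef_ev (x : elt K) u : coef x u = ev x (fun s => (s == u)%:R).
Proof. by apply: eq_bigr => p _; rewrite mulrC. Qed.

Lemma coef2_flatten (L : seq (elt2 K)) u : coef2 (flatten L) u = \sum_(x <- L) coef2 x u.
Proof. by rewrite /coef2 big_flatten. Qed.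

Lemma coef2_Delta (x : elt K) u : coef2 (Delta x) u = ev x (fun s => coef2 (DeltaF K s) u).
Proof.
rewrite /Delta coef2_flatten big_map /ev; apply: eq_bigr => p _.
by rewrite /coef2 big_map mulr_sumr; apply: eq_bigr => q _ /=; rewrite mulrCA.
Qed.

Lemma coef2_tens (x y : elt K) u : coef2 (tens x y) u = coef x u.1 * coef y u.2.
Proof.
rewrite /tens /coef2 /coef big_flatten big_map mulr_suml; apply: eq_bigr => p _.
rewrite big_map mulr_sumr; apply: eq_bigr => q _ /=.
case: u => u1 u2; rewrite xpair_eqE /=.
by case: (p.2 == u1); case: (q.2 == u2); rewrite /= ?mul1r ?mul0r ?mulr0 // mulr1 mul1r.
Qed.

Lemma coef2_DeltaF s u : coef2 (DeltaF K s) u =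
  \sum_(i <- iota 0 (deg s).+1 | allowable s i) ((lcut s i == u.1)%:R * (rcut s i == u.2)%:R).
Proof.
rewrite /coef2 /DeltaF big_map big_filter; apply: eq_bigr => i _ /=.
case: u => u1 u2; rewrite xpair_eqE mulr1 /=.
by case: (lcut s i == u1); case: (rcut s i == u2); rewrite /= ?mul1r ?mul0r.
Qed.

Definition Up s := s :: upset_strict s.

Lemma Up_sum s v : (s == v)%:R = \sum_(a <- Up s) coef (M K a) v :> K.
Proof.
rewrite big_cons !coef_ev ev_M.
under [X in _ = _ + X]eq_bigr do rewrite coef_ev.
by rewrite subrK.
Qed.

End Alg.

Definition spl t i := pbool (exists s r, [/\ valid s, valid r, t = graft s r & deg s = i]).

Lemma Up_memP s t : valid s -> (t \in Up s <-> le_PT s t).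
Proof.
move=> hv; split.
  rewrite inE => /orP[/eqP->|/US_mem[h _ _ _]] //; exact: le_refl.
move=> h; case: (t =P s) => [->|hne]; first exact: mem_head.
have [hn _ hvv] := le_props h.
rewrite inE; apply/orP; right; rewrite mem_filter.
rewrite -hn trees_complete ?hvv // andbT; apply/andP; split; first exact/pboolP.
exact/eqP.
Qed.

Lemma Up_uniq s : uniq (Up s).
Proof.
rewrite /Up /= filter_uniq ?trees_uniq // andbT mem_filter.
by rewrite eqxx /= andbF.
Qed.

Lemma splP t i : reflect (exists s r, [/\ valid s, valid r, t = graft s r & deg s = i]) (spl t i).
Proof. exact: pboolP. Qed.

Section Key.
Variable K : fieldType.
Local Open Scope ring_scope.
Variable u : ptree * ptree.
Definition GG (a b : ptree) : K := coef (M K a) u.1 * coef (M K b) u.2.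

Lemma KEY t i : valid t -> (i < nleaves t)%N ->
  \sum_(t' <- Up t | spl t' i) GG (lcut t' i) (rcut t' i) =
  if allowable t i then \sum_(a <- Up (lcut t i)) \sum_(b <- Up (rcut t i)) GG a b else 0.
Proof.
move=> hv hi; have [vl nl vr nr _] := cut_props hv hi.
case ha: (allowable t i); last first.
  apply: big1_seq => t' /andP[/splP [s [r [hs hr e hd]]] /(Up_memP _ hv) hle].
  subst t' i; have [a1 _ _] := B_dir hv hs hr hle.
  by rewrite a1 in ha.
have -> : \sum_(a <- Up (lcut t i)) \sum_(b <- Up (rcut t i)) GG a b =
          \sum_(p <- [seq (a, b) | a <- Up (lcut t i), b <- Up (rcut t i)]) GG p.1 p.2.
  by rewrite big_allpairs.
rewrite -big_filter.
have -> : \sum_(t' <- [seq x <- Up t | spl x i]) GG (lcut t' i) (rcut t' i) =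
   \sum_(p <- [seq (lcut t' i, rcut t' i) | t' <- [seq x <- Up t | spl x i]]) GG p.1 p.2.
  by rewrite big_map.
apply: perm_big; apply: uniq_perm.
- rewrite map_inj_in_uniq ?filter_uniq ?Up_uniq //.
  move=> x y; rewrite !mem_filter => /andP[/splP [s1 [r1 [hs1 hr1 e1 d1]]] _].
  move=> /andP[/splP [s2 [r2 [hs2 hr2 e2 d2]]] _] [ex ey].
  subst x y; have [c1 c2] := cut_graft hs1 hr1; have [c3 c4] := cut_graft hs2 hr2.
  rewrite d1 in c1 c2; rewrite d2 in c3 c4.
  by rewrite c1 c3 in ex; rewrite c2 c4 in ey; rewrite ex ey.
- apply: allpairs_uniq; try exact: Up_uniq.
  by move=> [a b] [c d] _ _ /= [-> ->].
- move=> [a b]; apply/idP/idP.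
  + case/mapP => t'; rewrite mem_filter => /andP[/splP [s [r [hs hr e hd]]] hin] [-> ->].
    subst t' i; have [-> ->] := cut_graft hs hr.
    have [_ l1 l2] := B_dir hv hs hr (iffLR (Up_memP _ hv) hin).
    apply/allpairsP; exists (s, r); split => //=; exact/(Up_memP _ _).
  + case/allpairsP => [[a' b'] [h1 h2 [-> ->]]].
    rewrite /= in h1 h2; move/(Up_memP _ vl): h1 => h1; move/(Up_memP _ vr): h2 => h2.
    have [n1 _ va] := le_props h1; have [n2 _ vb] := le_props h2.
    have hd : deg a' = i by rewrite /deg n1 nl.
    apply/mapP; exists (graft a' b').
      rewrite mem_filter; apply/andP; split.
        apply/splP; exists a', b'; split => //; [exact: va | exact: vb].
      by apply/(Up_memP _ hv); exact: C_dir hv hi ha h1 h2.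
    by rewrite -hd; have [-> ->] := cut_graft (va vl) (vb vr).
Qed.

End Key.

Section Phi.
Variable K : fieldType.
Local Open Scope ring_scope.

Definition PhiR (t : ptree) (u : ptree * ptree) : K :=
  \sum_(i <- iota 0 (nleaves t) | spl t i) GG K u (lcut t i) (rcut t i).

Lemma Phi_step t : valid t ->
  (forall t', t' \in upset_strict t -> forall u, coef2 (Delta (M K t')) u = PhiR t' u) ->
  forall u, coef2 (Delta (M K t)) u = PhiR t u.
Proof.
move=> hv IH u.
set n := nleaves t.
have hdeg : (deg t).+1 = n by rewrite /n /deg; have := valid_leaves hv; lia.
rewrite coef2_Delta ev_M.
have E1 : \sum_(t' <- upset_strict t) ev (M K t') (fun s => coef2 (DeltaF K s) u)
   = \sum_(i <- iota 0 n) \sum_(t' <- upset_strict t | spl t' i) GG K u (lcut t' i) (rcut t' i).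
  rewrite (eq_big_seq (fun t' => \sum_(i <- iota 0 n | spl t' i) GG K u (lcut t' i) (rcut t' i))).
    by rewrite (exchange_big_dep predT) //=.
  move=> t' ht'; rewrite -coef2_Delta IH // /PhiR.
  by have [_ _ -> _] := US_mem ht'.
have E2 : coef2 (DeltaF K t) u = PhiR t u +
    \sum_(i <- iota 0 n) \sum_(t' <- upset_strict t | spl t' i) GG K u (lcut t' i) (rcut t' i).
  rewrite coef2_DeltaF hdeg big_mkcond.
  rewrite (eq_big_seq (fun i => \sum_(t' <- Up t | spl t' i) GG K u (lcut t' i) (rcut t' i))).
    rewrite /PhiR [in RHS]big_mkcond -big_split /=; apply: eq_bigr => i _.
    by rewrite big_cons; case: (spl t i); rewrite ?add0r.
  move=> i; rewrite mem_iota add0n => hi.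
  rewrite (KEY K u hv hi); case: (allowable t i) => //.
  rewrite !Up_sum mulr_suml; apply: eq_bigr => a _; rewrite mulr_sumr; apply: eq_bigr => b _.
  by [].
by rewrite E1 E2 addrK.
Qed.

Lemma Phi t : valid t -> forall u, coef2 (Delta (M K t)) u = PhiR t u.
Proof.
move: {2}(pot t) (leqnn (pot t)) => n; elim: n t => [|n IH] t hn hv.
  all: apply: Phi_step => // t' ht'; have [hle hne _ _] := US_mem ht'.
  all: have [hp1 hp2] := le_pot hle.
  all: have hlt : (pot t' < pot t)%N by (rewrite ltn_neqAle hp1 andbT; apply/eqP => e; move: hne; rewrite (hp2 e) eqxx).
  - lia.
  apply: IH; first lia.
  by have [_ _ ] := le_props hle; apply.
Qed.
End Phi.

Lemma US_Leaf : upset_strict Leaf = [::].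
Proof.
rewrite /upset_strict; have -> : trees (nleaves Leaf) = [:: Leaf] by [].
by rewrite /= andbF.
Qed.

Local Open Scope ring_scope.

Lemma coef_M_Leaf (K : fieldType) v : coef (M K Leaf) v = ((Leaf == v)%:R : K).
Proof. by rewrite (Up_sum K) /Up US_Leaf big_cons big_nil addr0. Qed.

Theorem mainTheorem18 (K : fieldType) (t : ptree) :
  valid t -> (0 < deg t)%N ->
  forall u : ptree * ptree,
    coefDeltaPlus (M K t) u =
    coef2 (flatten [seq tens (M K (lcut t i)) (M K (rcut t i))
                   | i <- iota 1 (deg t).-1 & pbool (GD t i)]) u.
Proof.
move=> hv hd u.
case Ed: (deg t) hd => [//|d] _ /=.
rewrite /coefDeltaPlus Phi // /PhiR coef2_flatten big_map big_filter.
have hn : nleaves t = (1 + (d + 1))%N.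
  by move: Ed (valid_leaves hv); rewrite /deg; case: (nleaves t) => //= k ->; lia.
rewrite hn iotaD /= big_cons.
have s0 : spl t 0 by apply/splP; exists Leaf, t; split => //; rewrite graft_Leaf_l.
have sd : spl t (1 + d) by apply/splP; exists t, Leaf; split => //; rewrite Ed add1n.
rewrite s0 add0n iotaD big_cat /= big_cons big_nil sd addr0.
have [l0 r0] : lcut t 0 = Leaf /\ rcut t 0 = t.
  by have := cut_graft (isT : valid Leaf) hv; rewrite graft_Leaf_l.
have [ld rd] : lcut t (1 + d) = t /\ rcut t (1 + d) = Leaf.
  by have := full_cut hv; rewrite Ed add1n.
rewrite l0 r0 ld rd /GG !coef_M_Leaf.
have E : \sum_(i <- iota 1 d | spl t i)
      (coef (M K (lcut t i)) u.1 * coef (M K (rcut t i)) u.2) =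
   \sum_(i <- iota 1 d | pbool (GD t i)) coef2 (tens (M K (lcut t i)) (M K (rcut t i))) u.
  rewrite big_seq_cond [RHS]big_seq_cond; apply: eq_big => i.
    rewrite mem_iota; case hi: (_ <= i < _)%N => //=.
    apply/splP/pboolP => [h | [_ h]] //; split => //; rewrite Ed /=; move: hi; lia.
  by move=> _; rewrite coef2_tens.
rewrite E !(eq_sym Leaf).
by rewrite addrA addrK [X in X - _ = _]addrC addrK.
Qed.
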